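(* In the mixture setting, let $W$ be any measurable real-valued function on the space of component parameters. For $\theta$ with components $(\xi_1,\dots,\xi_G)$ let $\rho_\theta$ be the permutation that sorts the components by $W$ in nondecreasing order (ties broken by the original index), so that $P_{\rho_\theta}(\theta)$ has $W$-values nondecreasing in the component index. For each permutation $\sigma$ of $\{1,\dots,G\}$ define the ordering map $\psi_\sigma(\theta)=P_{\sigma}(P_{\rho_\theta}(\theta))$, so that the components $\xi'_1,\dots,\xi'_G$ of $\psi_\sigma(\theta)$ satisfy $W(\xi'_{\sigma^{-1}(1)})\le\dots\le W(\xi'_{\sigma^{-1}(G)})$. Let $E=E_{\hat\theta,\hat\Sigma,c}$ and $B=B_{\hat\theta,\hat\Sigma,c,\alpha}\subseteq E$. Define the $G\times G$ matrix $\Delta$ by $\Delta_{g_1,g_2}=1$ if $W(\xi_{g_1})<W(\xi_{g_2})$ for every $\theta\in E$, and $\Delta_{g_1,g_2}=0$ otherwise; let $\Omega$ be the set of permutations $\sigma$ such that the sequence $(\sigma^{-1}(1),\dots,\sigma^{-1}(G))$ is a topological ordering of the directed graph with adjacency matrix $\Delta$ (i.e. $g_1$ appears before $g_2$ whenever $\Delta_{g_1,g_2}=1$). Then for every sample $\theta^{(T/2+1)\star},\dots,\theta^{(T)\star}$, $$\frac{1}{G!}\sum_{\sigma}\frac{1}{T/2}\sum_{\substack{t=T/2+1\\P_\sigma(\theta^{(t)\star})\in B}}^T\frac{1/V(B)}{\pi(\theta^{(t)\star})L(\theta^{(t)\star})}=\frac{1}{G!}\sum_{\sigma\in\Omega}\frac{1}{T/2}\sum_{\substack{t=T/2+1\\\psi_\sigma(\theta^{(t)\star})\in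 B}}^T\frac{1/V(B)}{\pi(\theta^{(t)\star})L(\theta^{(t)\star})},$$ where the left-hand sum is over all $G!$ permutations.
   Context: Mixture model with parameter $\theta=(\xi_1,\dots,\xi_G,\tau_1,\dots,\tau_{G-1})\in\mathbb{R}^R$, prior $\pi$, likelihood $L$. For a permutation $\sigma$ of $\{1,\dots,G\}$, $P_\sigma$ is the relabelling map sending $\theta$ to the parameter with components $(\xi_{\sigma(1)},\dots,\xi_{\sigma(G)})$ and proportions $(\tau_{\sigma(1)},\dots,\tau_{\sigma(G)})$, $\tau_G=1-\sum_{g<G}\tau_g$. $E_{\hat\theta,\hat\Sigma,c}=\{\theta:(\theta-\hat\theta)^\top\hat\Sigma^{-1}(\theta-\hat\theta)<c^2\}$ for a vector $\hat\theta$, positive definite $\hat\Sigma$ and $c>0$; $B_{\hat\theta,\hat\Sigma,c,\alpha}=E_{\hat\theta,\hat\Sigma,c}\cap\{\theta:\pi(\theta)L(\theta)>\hat q_\alpha\}$ for a threshold $\hat q_\alpha>0$, with $0<V(B)<\infty$. In the paper $W$ is built from quadratic discriminant analysis, but any measurable $W$ is allowed. *)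

(* Defs.v *)
From HB Require Import structures.
From mathcomp Require Import all_boot all_order all_algebra all_fingroup.
From mathcomp Require Import boolp reals.
Set Implicit Arguments. Unset Strict Implicit. Unset Printing Implicit Defensive.
Import Order.TTheory GRing.Theory Num.Theory.
Local Open Scope ring_scope.

Section Mixture.
Variables (R : realType) (G d : nat).

(* dimension R of the parameter space: G components in R^d, then G-1 proportions *)
Definition pdim := (G * d + G.-1)%N.
Definition param := 'rV[R]_pdim.

Definition xi (th : param) (g : 'I_G) : 'rV[R]_d := row g (vec_mx (lsubmx th)).

Definition tau (th : param) (g : 'I_G) : R :=
  match (insub (val g) : option 'I_(G.-1)) with
  | Some i => rsubmx th 0 i
  | None => 1 - \sum_(i < G.-1) rsubmx th 0 i
  end.

Definition relabel (s : {perm 'I_G}) (th : param) : param :=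
  row_mx (mxvec (\matrix_(g < G, j < d) xi th (s g) 0 j))
         (\row_(i < G.-1) tau th (s (widen_ord (leq_pred G) i))).

Definition key_lt (W : 'rV[R]_d -> R) (th : param) (i j : 'I_G) : bool :=
  (W (xi th i) < W (xi th j)) || ((W (xi th i) == W (xi th j)) && (i < j)%N).

Definition rho (W : 'rV[R]_d -> R) (th : param) : {perm 'I_G} :=
  odflt 1%g [pick r : {perm 'I_G} | sorted (key_lt W th) [seq r k | k <- enum 'I_G]].

Definition psi (W : 'rV[R]_d -> R) (s : {perm 'I_G}) (th : param) : param :=
  relabel s (relabel (rho W th) th).

Definition posdef n (S : 'M[R]_n) : Prop :=
  S^T = S /\ forall v : 'rV[R]_n, v != 0 -> 0 < (v *m S *m v^T) 0 0.

Definition inE (thh : param) (S : 'M[R]_pdim) (c : R) (th : param) : bool :=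
  ((th - thh) *m invmx S *m (th - thh)^T) 0 0 < c ^+ 2.

Definition inB (thh : param) (S : 'M[R]_pdim) (c : R) (pi L : param -> R) (q : R)
  (th : param) : bool :=
  inE thh S c th && (q < pi th * L th).

Definition Delta (W : 'rV[R]_d -> R) (thh : param) (S : 'M[R]_pdim) (c : R)
  (g1 g2 : 'I_G) : Prop :=
  forall th : param, inE thh S c th -> W (xi th g1) < W (xi th g2).

Definition topo_order (adj : 'I_G -> 'I_G -> Prop) (s : seq 'I_G) : Prop :=
  perm_eq s (enum 'I_G) /\
  forall g1 g2, adj g1 g2 -> (index g1 s < index g2 s)%N.

Definition Omega (W : 'rV[R]_d -> R) (thh : param) (S : 'M[R]_pdim) (c : R)
  (s : {perm 'I_G}) : Prop :=
  topo_order (Delta W thh S c) [seq (s^-1)%g k | k <- enum 'I_G].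

End Mixture.

(* Main.v *)
Require Import Defs.
From HB Require Import structures.
From mathcomp Require Import all_boot all_order all_algebra all_fingroup.
From mathcomp Require Import boolp reals.
Import Order.TTheory GRing.Theory Num.Theory.
Local Open Scope ring_scope.

Section Aux.
Variables (R : realType) (G d : nat) (W : 'rV[R]_d -> R) (th : param R G d).

Local Notation klt := (key_lt W th).

Lemma klt_irr : irreflexive klt.
Proof. by move=> i; rewrite /key_lt ltxx eqxx ltnn. Qed.

Lemma klt_trans : transitive klt.
Proof.
move=> j i k; rewrite /key_lt.
case/orP=> [h1|/andP[/eqP e1 h1]]; case/orP=> [h2|/andP[/eqP e2 h2]].
- by rewrite (lt_trans h1 h2).
- by rewrite -e2 h1.
- by rewrite e1 h2.
- by rewrite e1 e2 eqxx (ltn_trans h1 h2) orbT.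
Qed.

Lemma klt_asym i j : klt i j -> ~~ klt j i.
Proof.
rewrite /key_lt; case/orP=> [h|/andP[/eqP e h]].
  by rewrite lt_gtF //= eq_sym (lt_eqF h).
by rewrite e ltxx eqxx /= -leqNgt ltnW.
Qed.

Lemma klt_total i j : i != j -> klt i j || klt j i.
Proof.
move=> nij; rewrite /key_lt.
case: (ltgtP (W (xi th i)) (W (xi th j))) => /= _ //.
by rewrite -neq_ltn.
Qed.

Definition kle i j := (i == j) || klt i j.

Lemma kle_total : total kle.
Proof.
move=> i j; rewrite /kle; case: (eqVneq i j) => [->|nij] //=.
exact: klt_total.
Qed.

Lemma path_strict x s : path kle x s -> uniq (x :: s) -> path klt x s.
Proof.
elim: s x => //= y s IH x /andP[hxy hp] /andP[hx hu].
rewrite IH //; case/orP: hxy => [/eqP e|->] //.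
by move: hx; rewrite e inE eqxx.
Qed.

Lemma rho_sorted : sorted klt [seq rho W th k | k <- enum 'I_G].
Proof.
rewrite /rho; case: pickP => [r //|/= H].
exfalso.
have hp : perm_eq (sort kle (enum 'I_G)) (ord_tuple G) by rewrite perm_sort.
case/tuple_permP: hp => p hp.
move: (H p); rewrite -/(is_true _) => /negP; apply.
have -> : [seq p k | k <- enum 'I_G] = sort kle (enum 'I_G).
  rewrite hp /= -val_ord_tuple; apply: eq_map => i; by rewrite tnth_ord_tuple.
have : sorted kle (sort kle (enum 'I_G)) by apply: sort_sorted; apply: kle_total.
have : uniq (sort kle (enum 'I_G)) by rewrite sort_uniq enum_uniq.
case: (sort _ _) => //= x s hu hs; exact: path_strict.
Qed.

Lemma rho_mono a b :
  W (xi th (rho W th a)) < W (xi th (rho W th b)) -> (a < b)%N.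
Proof.
move=> hW; rewrite ltnNge; apply/negP => hba.
have hs := sorted_ltn_nth klt_trans (rho W th a) rho_sorted.
move: hba; rewrite leq_eqVlt => /orP[/eqP e|hlt].
  have e' : b = a by apply: val_inj.
  by move: hW; rewrite e' ltxx.
have := hs b a; rewrite !inE size_map size_enum_ord !ltn_ord => /(_ isT isT hlt).
rewrite !(nth_map b) ?size_enum_ord ?ltn_ord //.
have E1 : forall i : 'I_G, nth b (Finite.enum 'I_G) i = i by move=> i; rewrite -enumT nth_ord_enum.
rewrite !E1.
by move/klt_asym; rewrite /key_lt hW.
all: by rewrite -enumT size_enum_ord ltn_ord.
Qed.

End Aux.

Section Relab.
Variables (R : realType) (n d : nat).
Local Notation G := n.+1.

Lemma xi_relabel (s : {perm 'I_G}) (th : param R G d) g :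
  xi (relabel s th) g = xi th (s g).
Proof. by apply/rowP => j; rewrite /xi /relabel row_mxKl mxvecK !mxE. Qed.

Lemma tau_sum (th : param R G d) : \sum_(g < G) tau th g = 1.
Proof.
rewrite big_ord_recr /=.
have -> : tau th ord_max = 1 - \sum_(i < n) rsubmx th 0 i.
  by rewrite /tau insubN //= ltnn.
have -> : \sum_(i < n) tau th (widen_ord (leqnSn n) i) = \sum_(i < n) rsubmx th 0 i.
  apply: eq_bigr => i _; rewrite /tau; case: insubP => [j _ hj|] /=.
    by congr (rsubmx th 0 _); apply: val_inj.
  by rewrite ltn_ord.
by rewrite addrC subrK.
Qed.

Lemma tau_relabel (s : {perm 'I_G}) (th : param R G d) g :
  tau (relabel s th) g = tau th (s g).
Proof.
rewrite {1}/tau; case: insubP => [i Hi Hv | Hn].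
  rewrite /relabel row_mxKr mxE; congr (tau th (s _)); exact: val_inj.
have eg : g = ord_max by apply: val_inj => /=; move: (ltn_ord g) Hn; rewrite ltnS leq_eqVlt => /orP[/eqP|->].
have hs : \sum_(g < G) tau th (s g) = 1 by rewrite -(tau_sum th); apply: esym; apply: reindex_inj; exact: perm_inj.
move: hs; rewrite big_ord_recr /= -eg => hs.
rewrite -{1}hs /relabel row_mxKr.
have -> : \sum_(i < n) (\row_(i0 < n) tau th (s (widen_ord (leq_pred G) i0))) 0 i
  = \sum_(i < n) tau th (s (widen_ord (leqnSn n) i)).
  by apply: eq_bigr => i _; rewrite mxE; congr (tau th (s _)); apply: val_inj.
by rewrite addrC addrK.
Qed.

Lemma relabelM (s r : {perm 'I_G}) (th : param R G d) :
  relabel s (relabel r th) = relabel (s * r)%g th.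
Proof.
rewrite [RHS]/relabel {1}/relabel; congr row_mx.
  by congr mxvec; apply/matrixP => g j; rewrite [LHS]mxE [RHS]mxE xi_relabel permM.
by apply/matrixP => k i; rewrite [LHS]mxE [RHS]mxE tau_relabel permM.
Qed.

Lemma omega_of (W : 'rV[R]_d -> R) thh (S : 'M[R]_(pdim G d)) c
  (th : param R G d) (s : {perm 'I_G}) :
  Defs.inE thh S c (relabel (s * rho W th)%g th) -> Omega W thh S c s.
Proof.
move=> hE; split.
  apply: uniq_perm; first by rewrite map_inj_uniq ?enum_uniq //; exact: perm_inj.
    exact: enum_uniq.
  move=> x; rewrite mem_enum; apply/mapP; exists (s x); first by rewrite mem_enum.
  by rewrite permK.
move=> g1 g2 hD; have := hD _ hE; rewrite !xi_relabel !permM => hW.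
rewrite -[g1](permK s) -[g2](permK s) !(index_map (@perm_inj _ s^-1)) !index_enum_ord.
exact: (@rho_mono R G d W th _ _ hW).
Qed.

Lemma key_count (W : 'rV[R]_d -> R) thh (S : 'M[R]_(pdim G d)) c pi L q
  (th : param R G d) (x : R) :
  \sum_(s : {perm 'I_G}) (if inB thh S c pi L q (relabel s th) then x else 0)
  = \sum_(s : {perm 'I_G} | `[< Omega W thh S c s >])
      (if inB thh S c pi L q (psi W s th) then x else 0).
Proof.
rewrite (reindex_inj (@mulIg _ (rho W th))) /= [RHS]big_mkcond /=.
apply: eq_bigr => s _; rewrite /psi relabelM.
case: asboolP => // nO; case: ifP => // /andP[hE _]; exfalso.
exact: (nO (@omega_of W thh S c th s hE)).
Qed.

End Relab.
Theorem theorem4 (R : realType) (G d : nat) (hG : (0 < G)%N)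
  (W : 'rV[R]_d -> R) (pi L : param R G d -> R)
  (hpi : forall th, 0 <= pi th) (hL : forall th, 0 <= L th)
  (thh : param R G d) (S : 'M[R]_(pdim G d)) (hS : posdef S)
  (c : R) (hc : 0 < c) (q : R) (hq : 0 < q)
  (VB : R) (hVB : 0 < VB)
  (T : nat) (ths : nat -> param R G d) :
  (G`!)%:R^-1 * \sum_(s : {perm 'I_G})
     ((T./2)%:R^-1 * \sum_(T./2.+1 <= t < T.+1 | inB thh S c pi L q (relabel s (ths t)))
        (VB^-1 / (pi (ths t) * L (ths t))))
  =
  (G`!)%:R^-1 * \sum_(s : {perm 'I_G} | `[< Omega W thh S c s >])
     ((T./2)%:R^-1 * \sum_(T./2.+1 <= t < T.+1 | inB thh S c pi L q (psi W s (ths t)))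
        (VB^-1 / (pi (ths t) * L (ths t)))).

Proof.
move: hG W pi L hpi hL thh S hS c hc q hq VB hVB T ths.
case: G => // n hG W pi L hpi hL thh S hS c hc q hq VB hVB T ths.
congr (_ * _).
rewrite -!big_distrr /=; congr (_ * _).
under [LHS]eq_bigr => s _ do rewrite big_mkcond.
under [RHS]eq_bigr => s _ do rewrite big_mkcond.
rewrite [LHS]exchange_big [RHS]exchange_big /=.
apply: eq_bigr => t _.
exact: key_count.
Qed.
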